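(* Let $n,m$ be positive integers and $d=nm$. Let $\boldsymbol\alpha,\boldsymbol\beta\in\mathbb{R}^m_{\geq 0}$ be such that $\mathbf a=(\boldsymbol\alpha^\top,\dots,\boldsymbol\alpha^\top)^\top\in\mathbb{R}^d$ and $\mathbf b=(\boldsymbol\beta^\top,\dots,\boldsymbol\beta^\top)^\top\in\mathbb{R}^d$ ($n$ stacked copies each) are probability vectors. Let $\mathbf C_0,\dots,\mathbf C_{n-1}\in\mathbb{R}^{m\times m}_{\geq 0}$ and let $\mathbf C\in\mathbb{R}^{d\times d}$ be the block-circulant matrix whose $(r,s)$-th $m\times m$ block ($0\le r,s\le n-1$) is $\mathbf C_{(s-r)\bmod n}$. Let $\phi:\mathbb{R}\to\mathbb{R}\cup\{+\infty\}$ be convex with $\phi(x)=+\infty$ for $x<0$. Consider the problem $$\min_{\mathbf T\in\mathbb{R}^{d\times d}} \langle \mathbf C,\mathbf T\rangle+\sum_{i,j=0}^{d-1}\phi(T_{ij})\quad\text{s.t.}\quad \mathbf T\mathbf 1_d=\mathbf a,\ \ \mathbf T^\top\mathbf 1_d=\mathbf b,$$ and suppose it has an optimal solution. Then there exists an optimal solution $\mathbf T$ of this problem that is block-circulant, i.e. there are $\mathbf T_0,\dots,\mathbf T_{n-1}\in\mathbb{R}^{m\times m}_{\geq 0}$ such that the $(r,s)$-th $m\times m$ block of $\mathbf T$ is $\mathbf T_{(s-r)\bmod n}$ for all $0\le r,s\le n-1$.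
   Context: $\langle\mathbf X,\mathbf Y\rangle=\sum_{i,j}X_{ij}Y_{ij}$ is the Frobenius inner product, and $\mathbf 1_d$ is the all-ones vector in $\mathbb{R}^d$. Block-circulant means the first block row is $(\mathbf C_0,\mathbf C_1,\dots,\mathbf C_{n-1})$ and each subsequent block row is the cyclic shift of the previous one by one block to the right. *)

(* Defs.v *)
From mathcomp Require Import all_boot all_order all_algebra.
From mathcomp Require Import all_classical all_reals ereal.
Set Implicit Arguments. Unset Strict Implicit. Unset Printing Implicit Defensive.
Import Order.TTheory GRing.Theory Num.Theory.
Local Open Scope ring_scope.

(* Indices of R^d with d = n*m are 'I_(n * m); index k lies in block k %/ m
   at position k %% m inside the block. *)

Definition block_circulant (R : Type) (n m : nat)
  (M : 'M[R]_(n * m)) (B : nat -> 'M[R]_m) : Prop :=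
  forall (i j : 'I_(n * m)) (hi : (i %% m < m)%N) (hj : (j %% m < m)%N),
    M i j = B ((j %/ m + n - i %/ m) %% n)%N (Ordinal hi) (Ordinal hj).

Definition stacked (R : Type) (n m : nat) (v : 'I_m -> R) (w : 'I_(n * m) -> R) : Prop :=
  forall (k : 'I_(n * m)) (hk : (k %% m < m)%N), w k = v (Ordinal hk).

Definition is_prob_vec (R : numDomainType) (d : nat) (w : 'I_d -> R) : Prop :=
  (forall k, 0 <= w k) /\ \sum_(k < d) w k = 1.

(* Convex function R -> R ∪ {+oo} (values in \bar R, never -oo);
   convexity uses the standard convention 0 * (+oo) = 0. *)
Definition convex_ext (R : realType) (phi : R -> \bar R) : Prop :=
  (forall x, phi x != -oo%E) /\
  forall (x y t : R), (0 <= t <= 1)%R ->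
    (phi (t * x + (1 - t) * y)%R <= t%:E * phi x + (1 - t)%:E * phi y)%E.

Definition ot_obj (R : realType) (d : nat) (phi : R -> \bar R)
  (C T : 'M[R]_d) : \bar R :=
  ((\sum_(i < d) \sum_(j < d) C i j * T i j)%:E
   + \sum_(i < d) \sum_(j < d) phi (T i j))%E.

Definition feasible (R : realType) (d : nat) (a b : 'I_d -> R) (T : 'M[R]_d) : Prop :=
  (forall i, \sum_(j < d) T i j = a i) /\ (forall j, \sum_(i < d) T i j = b j).

Definition optimal (R : realType) (d : nat) (phi : R -> \bar R)
  (C : 'M[R]_d) (a b : 'I_d -> R) (T : 'M[R]_d) : Prop :=
  feasible a b T /\
  forall T', feasible a b T' -> (ot_obj phi C T <= ot_obj phi C T')%E.

(* Main.v *)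
Require Import Defs.
From mathcomp Require Import all_boot all_order all_algebra.
From mathcomp Require Import all_classical all_reals ereal.
From mathcomp Require Import zify ring lra.
Import Order.TTheory GRing.Theory Num.Theory.
Section Idx.
Variables (n m : nat) (hn : (0 < n)%N) (hm : (0 < m)%N).

Lemma mk_lt q r : (q %% n * m + r %% m < n * m)%N.
Proof.
have h1 := ltn_pmod q hn; have h2 := ltn_pmod r hm.
move: (q %% n) (r %% m) h1 h2 => x y; nia.
Qed.

Definition mk q r : 'I_(n * m) := Ordinal (mk_lt q r).

Lemma val_mk q r : val (mk q r) = (q %% n * m + r %% m)%N.
Proof. by []. Qed.

Lemma mk_div q r : (mk q r %/ m = q %% n)%N.
Proof. by rewrite /= divnMDl // divn_small ?addn0 // ltn_pmod. Qed.

Lemma mk_mod q r : (mk q r %% m = r %% m)%N.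
Proof. by rewrite /= modnMDl modn_mod. Qed.

Lemma idiv_lt (i : 'I_(n * m)) : (i %/ m < n)%N.
Proof. by rewrite ltn_divLR. Qed.

Definition sh (k : nat) (i : 'I_(n * m)) := mk (i %/ m + k) i.

Lemma sh_inj k : injective (sh k).
Proof.
move=> i j /(congr1 val) /= e.
have e1 : (i %% m = j %% m)%N.
  by rewrite -(mk_mod (i %/ m + k) i) -(mk_mod (j %/ m + k) j) /= e.
have e2 : ((i %/ m + k) %% n = (j %/ m + k) %% n)%N.
  by rewrite -(mk_div (i %/ m + k) i) -(mk_div (j %/ m + k) j) /= e.
have /eqP e3 : (i %/ m == j %/ m %[mod n])%N by rewrite -(eqn_modDr k) e2.
rewrite !modn_small ?idiv_lt // in e3.
by apply: val_inj; rewrite /= (divn_eq i m) (divn_eq j m) e1 e3.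
Qed.

Lemma sh_mod k i : (sh k i %% m = i %% m)%N.
Proof. by rewrite mk_mod. Qed.

Lemma sh_div k i : (sh k i %/ m = (i %/ m + k) %% n)%N.
Proof. by rewrite mk_div. Qed.

Lemma sh_modk k i : sh k i = sh (k %% n) i.
Proof. by apply: val_inj; rewrite /= modnDmr. Qed.

Lemma sh_comp k l i : sh k (sh l i) = sh (l + k) i.
Proof. by apply: val_inj; rewrite /= sh_div sh_mod modnDml addnA. Qed.

Lemma modsub_spec u v : (u < n)%N -> (((v + n - u) %% n + u) %% n = v %% n)%N.
Proof.
move=> hu; rewrite modnDml subnK; last by rewrite (leq_trans (ltnW hu)) // leq_addl.
by rewrite modnDr.
Qed.

Lemma modsub_uniq w w' u : (w < n)%N -> (w' < n)%N ->
  ((w + u) %% n = (w' + u) %% n)%N -> w = w'.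
Proof.
move=> hw hw' e; have /eqP : (w == w' %[mod n])%N by rewrite -(eqn_modDr u) e.
by rewrite !modn_small.
Qed.

Lemma circ_idx a b k : (a < n)%N ->
  (((b + k) %% n + n - (a + k) %% n) %% n = (b + n - a) %% n)%N.
Proof.
move=> ha; apply: (@modsub_uniq _ _ ((a + k) %% n)); rewrite ?ltn_pmod //.
rewrite (@modsub_spec _ _ (ltn_pmod (a + k) hn)) modnDmr addnA.
rewrite -[in RHS]modnDml (@modsub_spec a b ha).
by rewrite modn_mod -modnDml.
Qed.


Lemma reidx2 (V : Type) (idx : V) (op : Monoid.com_law idx) k
  (F : 'I_(n * m) -> 'I_(n * m) -> V) :
  \big[op/idx]_i \big[op/idx]_j F (sh k i) (sh k j) = \big[op/idx]_i \big[op/idx]_j F i j.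
Proof.
rewrite [RHS](reindex_inj (sh_inj k)); apply: eq_bigr => i _.
by rewrite [RHS](reindex_inj (sh_inj k)).
Qed.

Lemma reidx1 (V : Type) (idx : V) (op : Monoid.com_law idx) k
  (F : 'I_(n * m) -> V) :
  \big[op/idx]_i F (sh k i) = \big[op/idx]_i F i.
Proof. by rewrite [RHS](reindex_inj (sh_inj k)). Qed.

Lemma cyc_sum (V : Type) (idx : V) (op : Monoid.com_law idx) (G : nat -> V)
  (hG : forall k, G k = G (k %% n)) l :
  \big[op/idx]_(k < n) G (l + k) = \big[op/idx]_(k < n) G k.
Proof.
pose f (k : 'I_n) : 'I_n := Ordinal (ltn_pmod (l + k) hn).
have finj : injective f.
  move=> k k' /(congr1 val) /= e.
  have /eqP : (k == k' %[mod n]) by rewrite -(eqn_modDl l) e.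
  by rewrite !modn_small // => /val_inj.
rewrite [RHS](reindex_inj finj); apply: eq_bigr => k _.
by rewrite /= -hG.
Qed.

Lemma circ_of (V : Type) (M : 'M[V]_(n * m))
  (hM : forall l i j, M (sh l i) (sh l j) = M i j) :
  block_circulant M (fun q => (\matrix_(r < m, c < m) M (mk 0 r) (mk q c))%R).
Proof.
move=> i j hi hj; rewrite mxE -(hM (n - i %/ m) i j).
have hi' : (i %/ m <= n)%N := ltnW (idiv_lt i).
apply: (congr2 M); apply: val_inj; rewrite /sh !val_mk /=.
  by rewrite (subnKC hi') modnn mod0n modn_mod.
by rewrite (addnBA _ hi') !modn_mod.
Qed.


End Idx.


Local Open Scope ring_scope.

Lemma jensen (R : realType) (phi : R -> \bar R) (hphi : convex_ext phi)
  (x y : nat -> R) (hxy : forall k, phi (x k) = (y k)%:E) (p : nat) : (0 < p)%N ->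
  (phi ((\sum_(k < p) x k) / p%:R)%R <= ((\sum_(k < p) y k) / p%:R)%R%:E)%E.
Proof.
elim: p => [//|p IH] _.
case: (posnP p) => [->|pp].
  by rewrite !big_ord1 !divr1 hxy.
have IH' := IH pp.
have hp : (p%:R : R) != 0 by rewrite pnatr_eq0 -lt0n.
have hp1 : (p.+1%:R : R) != 0 by rewrite pnatr_eq0.
set t : R := p%:R / p.+1%:R.
have ht : (0 <= t <= 1).
  apply/andP; split; first by rewrite divr_ge0.
  by rewrite ler_pdivrMr ?ltr0n // mul1r ler_nat.
have e1 : forall z : nat -> R, (\sum_(k < p.+1) z k) / p.+1%:R
    = t * ((\sum_(k < p) z k) / p%:R) + (1 - t) * z p.
  move=> z; rewrite big_ord_recr /= /t; field.
  by rewrite hp andbT addrC natr1.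
rewrite e1 e1; apply: le_trans (proj2 hphi _ _ _ ht) _.
rewrite hxy [in X in (_ <= X)%E]EFinD [in X in (_ <= X)%E]EFinM [in X in (_ <= X)%E]EFinM.
apply: leeD2r; apply: lee_wpmul2l => //.

by rewrite lee_fin; case/andP: ht.
Qed.

Lemma avg_sum (R : realType) (n N : nat) (F : 'I_n -> 'I_N -> 'I_N -> R) :
  \sum_i \sum_j (\sum_(k < n) F k i j) / n%:R = (\sum_(k < n) \sum_i \sum_j F k i j) / n%:R.
Proof.
under eq_bigr => i _ do rewrite -mulr_suml.
rewrite -mulr_suml; congr (_ / _).
under eq_bigr => i _ do rewrite exchange_big.
by rewrite exchange_big.
Qed.

Theorem lemma1 (R : realType) (n m : nat) (hn : (0 < n)%N) (hm : (0 < m)%N)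
  (alpha beta : 'I_m -> R) (a b : 'I_(n * m) -> R)
  (halpha : forall k, 0 <= alpha k) (hbeta : forall k, 0 <= beta k)
  (ha : @stacked R n m alpha a) (hb : @stacked R n m beta b)
  (hpa : is_prob_vec a) (hpb : is_prob_vec b)
  (Cb : nat -> 'M[R]_m) (hCb : forall k i j, 0 <= Cb k i j)
  (C : 'M[R]_(n * m)) (hC : block_circulant C Cb)
  (phi : R -> \bar R) (hphi : convex_ext phi)
  (hphineg : forall x, x < 0 -> phi x = +oo%E)
  (hex : exists T, optimal phi C a b T) :
  exists T : 'M[R]_(n * m), optimal phi C a b T /\
    exists Tb : nat -> 'M[R]_m, (forall k i j, 0 <= Tb k i j) /\
      block_circulant T Tb.
Proof.
case: hex => T [hfT hoT].
have [hinf|hfin] := eqVneq (ot_obj phi C T) +oo%E.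
  exists (\matrix_(i, j) (a i * b j)); split.
    split.
      split=> i; under eq_bigr do rewrite mxE.
        by rewrite -mulr_sumr (proj2 hpb) mulr1.
      by rewrite -mulr_suml (proj2 hpa) mul1r.
    move=> T' /hoT; rewrite hinf leye_eq => /eqP ->; exact: leey.
  exists (fun _ => \matrix_(r, c) (alpha r * beta c)); split.
    by move=> k i j; rewrite mxE mulr_ge0.
  by move=> i j hi hj; rewrite !mxE (ha i hi) (hb j hj).
have hninf : forall x, phi x != -oo%E := proj1 hphi.
have hfinij : forall i j, phi (T i j) != +oo%E.
  move=> i j; apply/negP => /eqP hij; move/negP: hfin; apply; rewrite /ot_obj.
  have -> : (\sum_(i0 < n * m) \sum_(j0 < n * m) phi (T i0 j0) = +oo)%E.
    apply/esum_eqyP.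
      move=> i0 _; apply/negP => /eqP /esum_eqNyP [k [_ _ hk]].
      by move: (hninf (T i0 k)); rewrite hk.
    exists i; split; rewrite ?mem_index_enum //.
    apply/esum_eqyP; first by move=> *; exact: hninf.
    by exists j; split; rewrite ?mem_index_enum.
  by rewrite addey.
have hT0 : forall i j, 0 <= T i j.
  by move=> i j; rewrite leNgt; apply/negP => /hphineg h; move: (hfinij i j); rewrite h.
pose y i j := fine (phi (T i j)).
have hy : forall i j, phi (T i j) = (y i j)%:E.
  by move=> i j; rewrite /y fineK // fin_numE hninf hfinij.
have a_sh : forall k i, a (sh n m hn hm k i) = a i.
  move=> k i; rewrite (ha _ (ltn_pmod _ hm)) (ha i (ltn_pmod _ hm)).
  by congr alpha; apply: val_inj; rewrite /= sh_mod.
have b_sh : forall k i, b (sh n m hn hm k i) = b i.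
  move=> k i; rewrite (hb _ (ltn_pmod _ hm)) (hb i (ltn_pmod _ hm)).
  by congr beta; apply: val_inj; rewrite /= sh_mod.
have C_sh : forall k i j, C (sh n m hn hm k i) (sh n m hn hm k j) = C i j.
  move=> k i j.
  rewrite (hC _ _ (ltn_pmod _ hm) (ltn_pmod _ hm)) (hC i j (ltn_pmod _ hm) (ltn_pmod _ hm)).
  rewrite !sh_div circ_idx ?idiv_lt //.
  by apply: (congr2 (fun_of_matrix _)); apply: val_inj; rewrite /= sh_mod.
pose Tav := \matrix_(i, j) ((\sum_(k < n) T (sh n m hn hm k i) (sh n m hn hm k j)) / n%:R).
have hn0 : (n%:R : R) != 0 by rewrite pnatr_eq0 -lt0n.
have avgc : forall c : R, (\sum_(k < n) c) / n%:R = c.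
  by move=> c; rewrite sumr_const card_ord -mulr_natr; field.
have hfeas : feasible a b Tav.
  split=> i; under eq_bigr do rewrite mxE; rewrite -mulr_suml exchange_big /=.
    rewrite -[RHS]avgc; congr (_ / _); apply: eq_bigr => k _.
    by rewrite (reidx1 _ _ hn hm _ _ _ k (T (sh n m hn hm k i))) (proj1 hfT) a_sh.
  rewrite -[RHS]avgc; congr (_ / _); apply: eq_bigr => k _.
  by rewrite (reidx1 _ _ hn hm _ _ _ k (fun i0 => T i0 (sh n m hn hm k i))) (proj2 hfT) b_sh.
have hlin : \sum_i \sum_j C i j * Tav i j = \sum_i \sum_j C i j * T i j.
  transitivity (\sum_i \sum_j (\sum_(k < n) C i j * T (sh n m hn hm k i) (sh n m hn hm k j)) / n%:R).
    by apply: eq_bigr => i _; apply: eq_bigr => j _; rewrite mxE mulrA mulr_sumr.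
  rewrite avg_sum -[RHS]avgc; congr (_ / _); apply: eq_bigr => k _.
  under eq_bigr => i _ do under eq_bigr => j _ do rewrite -(C_sh k).
  exact: (reidx2 _ _ hn hm _ _ _ k (fun i j => C i j * T i j)).
have hphiav : (\sum_i \sum_j phi (Tav i j) <= \sum_i \sum_j phi (T i j))%E.
  apply: (@le_trans _ _ (\sum_i \sum_j
     ((\sum_(k < n) y (sh n m hn hm k i) (sh n m hn hm k j)) / n%:R)%:E)%E).
    apply: lee_sum => i _; apply: lee_sum => j _; rewrite mxE.
    exact: (@jensen R phi hphi (fun k => T (sh n m hn hm k i) (sh n m hn hm k j))
              (fun k => y (sh n m hn hm k i) (sh n m hn hm k j)) (fun k => hy _ _) n hn).
  rewrite le_eqVlt; apply/orP; left; apply/eqP.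
  rewrite [RHS](eq_bigr (fun i => (\sum_j y i j)%:E)%E); last first.
    by move=> i _; rewrite -sumEFin; apply: eq_bigr => j _; exact: hy.
  rewrite (eq_bigr (fun i => (\sum_j ((\sum_(k < n) y (sh n m hn hm k i) (sh n m hn hm k j)) / n%:R))%:E)%E); last first.
    by move=> i _; rewrite sumEFin.
  rewrite !sumEFin; congr EFin.
  rewrite avg_sum -[RHS]avgc; congr (_ / _); apply: eq_bigr => k _.
  exact: (reidx2 _ _ hn hm _ _ _ k (fun i j => y i j)).
exists Tav; split.
  split=> // T' hT'; apply: le_trans (hoT T' hT').
  by rewrite /ot_obj hlin; apply: leeD2l.
exists (fun q => \matrix_(r < m, c < m) Tav (mk n m hn hm 0 r) (mk n m hn hm q c)); split.
  move=> k r c; rewrite !mxE; apply: divr_ge0; last exact: ler0n.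
  by apply: sumr_ge0 => *; exact: hT0.
apply: circ_of => l i j; rewrite !mxE; congr (_ / _).
under eq_bigr => k _ do rewrite !sh_comp.
apply: (cyc_sum _ hn _ _ _ (fun k => T (sh n m hn hm k i) (sh n m hn hm k j))).
by move=> k /=; rewrite (sh_modk _ _ hn hm k i) (sh_modk _ _ hn hm k j).
Qed.
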